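(* Let $\rho:\mathcal{X}\to\mathbb{R}$ be a monetary risk measure and let $P\in\mathcal{M}_1$. Then $\rho^P$ is a monetary risk measure on $L^\infty(P)$, where its defining properties are understood $P$-almost surely: (i) if $X\ge 0$ $P$-a.s. then $\rho^P(X)\le 0$; (ii) if $X\ge Y$ $P$-a.s. then $\rho^P(X)\le\rho^P(Y)$; (iii) $\rho^P(X+a)=\rho^P(X)-a$ for all $a\in\mathbb{R}$, for all $X,Y\in L^\infty(P)$. If moreover $\rho$ is a convex risk measure, then $\rho^P$ is convex, i.e. $\rho^P(\lambda X+(1-\lambda)Y)\le\lambda\rho^P(X)+(1-\lambda)\rho^P(Y)$ for all $X,Y\in L^\infty(P)$ and $\lambda\in(0,1)$.
   Context: $(\Omega,\mathcal{F})$ is a measurable space, $\mathcal{M}_1$ the set of probability measures on it, and $\mathcal{X}$ the space of all $\mathcal{F}$-measurable $X:\Omega\to\mathbb{R}$ with $\sup_{\omega}|X(\omega)|<\infty$. A monetary risk measure is a map $\rho:\mathcal{X}\to\mathbb{R}$ such that, pointwise for all $\omega$: $X\ge0\Rightarrow\rho(X)\le0$; $X\ge Y\Rightarrow\rho(X)\le\rho(Y)$; $\rho(X+a)=\rho(X)-a$ for all $a\in\mathbb{R}$. It is a convex risk measure if in addition $\rho(\lambda X+(1-\lambda)Y)\le\lambda\rho(X)+(1-\lambda)\rho(Y)$ for all $X,Y\in\mathcal{X}$, $\lambda\in(0,1)$. For $P\in\mathcal{M}_1$ and $X\in L^\infty(P)=L^\infty(\Omega,\mathcal{F},P)$ define $\rho^P(X)=\inf\{\rho(\widetilde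 X):\widetilde X\in\mathcal{X},\ P(\widetilde X=X)=1\}$. *)

(* Defs.v *)
From HB Require Import structures.
From mathcomp Require Import all_boot all_order all_algebra.
From mathcomp Require Import all_classical all_reals all_analysis.
Set Implicit Arguments. Unset Strict Implicit. Unset Printing Implicit Defensive.
Import Order.TTheory GRing.Theory Num.Theory.
Local Open Scope classical_set_scope.
Local Open Scope ring_scope.

Section RiskDefs.
Context {d : measure_display} {T : measurableType d} {R : realType}.

Definition bdd_meas (X : T -> R) : Prop :=
  measurable_fun setT X /\ exists M : R, forall w, `|X w| <= M.

Definition Linf (P : probability T R) (X : T -> R) : Prop :=
  measurable_fun setT X /\ exists M : R, {ae P, forall w, `|X w| <= M}.

Definition monetary (rho : (T -> R) -> R) : Prop :=
  (forall X, bdd_meas X -> (forall w, 0 <= X w) -> rho X <= 0) /\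
  (forall X Y, bdd_meas X -> bdd_meas Y -> (forall w, Y w <= X w) ->
     rho X <= rho Y) /\
  (forall X (a : R), bdd_meas X -> rho (fun w => X w + a) = rho X - a).

Definition convex_rm (rho : (T -> R) -> R) : Prop :=
  forall X Y (l : R), bdd_meas X -> bdd_meas Y -> 0 < l < 1 ->
    rho (fun w => l * X w + (1 - l) * Y w) <= l * rho X + (1 - l) * rho Y.

Definition rhoP (rho : (T -> R) -> R) (P : probability T R) (X : T -> R)
  : \bar R :=
  ereal_inf [set (rho Xt)%:E | Xt in
     [set Xt | bdd_meas Xt /\ P [set w | Xt w = X w] = 1%E]].

End RiskDefs.

(* Main.v *)
Require Import Defs.
From HB Require Import structures.
From mathcomp Require Import all_boot all_order all_algebra.
From mathcomp Require Import all_classical all_reals all_analysis.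
From mathcomp Require Import ring lra.
Import Order.TTheory GRing.Theory Num.Theory.
Local Open Scope classical_set_scope.
Local Open Scope ring_scope.

Section Helpers.
Context {d : measure_display} {T : measurableType d} {R : realType}
  {P : probability T R}.

Lemma meas_eqset {f g : T -> R} : measurable_fun setT f -> measurable_fun setT g ->
  measurable [set w | f w = g w].
Proof.
move=> mf mg.
have -> : [set w | f w = g w] = setT `&` (f \- g) @^-1` [set 0].
  apply/seteqP; split => w /=.
    by move=> ->; rewrite subrr.
  by move=> [_ /eqP]; rewrite subr_eq0 => /eqP.
have mfg : measurable_fun setT (f \- g) by apply: measurable_realfun.measurable_funB.
exact: mfg measurableT _ (measurable_set1 0).
Qed.

Lemma P1_ae {f g : T -> R} : measurable_fun setT f -> measurable_fun setT g ->
  (P [set w | f w = g w] = 1%E <-> {ae P, forall w, f w = g w}).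
Proof.
move=> mf mg; have mE := meas_eqset mf mg; split.
  move=> h; rewrite /almost_everywhere /=.
  apply/negligibleP; first exact: measurableC.
  idtac.
  have hc := probability_setC P mE; rewrite h subee // in hc; exact: hc.
move=> h.
have h0 : P (~` [set w | f w = g w]) = 0%E.
  by apply: measure_negligible; [exact: measurableC | exact: h].
have hc := probability_setC P mE; rewrite hc in h0.
move: h0 (probability_le1 P mE); case: (P _) => [r| |] //=.
by rewrite -EFinB => -[] /eqP; rewrite subr_eq0 => /eqP <-.
Qed.

Lemma ae2 {A B C : T -> Prop} : {ae P, forall w, A w} -> {ae P, forall w, B w} ->
  (forall w, A w -> B w -> C w) -> {ae P, forall w, C w}.
Proof.
move=> hA hB hC; rewrite /almost_everywhere /=.
apply: (negligibleS _ (negligibleU hA hB)) => w /= nC.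
by apply: contrapT => /not_orP [/contrapT a /contrapT b]; apply: nC; apply: hC.
Qed.

Lemma ae_mono {A C : T -> Prop} : {ae P, forall w, A w} ->
  (forall w, A w -> C w) -> {ae P, forall w, C w}.
Proof. by move=> hA hC; apply: (ae2 hA hA) => w a _; apply: hC. Qed.

Lemma bdd_lin {f g : T -> R} (a b : R) : bdd_meas f -> bdd_meas g ->
  bdd_meas (fun w => a * f w + b * g w).
Proof.
move=> [mf [M1 hM1]] [mg [M2 hM2]]; split.
  have : measurable_fun setT ((cst a \* f) \+ (cst b \* g)).
    apply: measurable_realfun.measurable_funD;
    by apply: measurable_realfun.measurable_funM => //; exact: measurable_cst.
  by [].
exists (`|a| * M1 + `|b| * M2) => w.
apply: (le_trans (ler_normD _ _)); rewrite !normrM.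
by apply: lerD; apply: ler_wpM2l => //.
Qed.

Lemma bdd_cst (a : R) : bdd_meas (fun _ : T => a).
Proof. by split; [exact: measurable_cst | exists `|a|]. Qed.

Lemma bdd_max {f g : T -> R} : bdd_meas f -> bdd_meas g ->
  bdd_meas (fun w => Num.max (f w) (g w)).
Proof.
move=> [mf [M1 hM1]] [mg [M2 hM2]]; split.
  have : measurable_fun setT (f \max g) by apply: measurable_realfun.measurable_maxr.
  by [].
exists (M1 + M2) => w.
have h1 := hM1 w; have h2 := hM2 w.
have p1 : 0 <= M1 by apply: le_trans h1.
have p2 : 0 <= M2 by apply: le_trans h2.
rewrite maxEle; case: ifP => _.
  by apply: le_trans h2 _; rewrite lerDr.
by apply: le_trans h1 _; rewrite lerDl.
Qed.

Lemma exS {X : T -> R} : Linf P X ->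
  exists Xt, bdd_meas Xt /\ {ae P, forall w, Xt w = X w}.
Proof.
move=> [mX [M hM]].
set M' := `|M|.
have hM' : {ae P, forall w, `|X w| <= M'}.
  by apply: (ae_mono hM) => w h; apply: le_trans h _; exact: ler_norm.
have M'0 : 0 <= M' by rewrite /M' normr_ge0.
exists (fun w => Num.max (- M') (Num.min M' (X w))); split.
  split.
    have : measurable_fun setT (cst (- M') \max (cst M' \min X)).
      apply: measurable_realfun.measurable_maxr; first exact: measurable_cst.
      apply: measurable_realfun.measurable_minr => //; exact: measurable_cst.
    by [].
  exists M' => w; rewrite ler_norml; apply/andP; split.
    by rewrite le_max lexx.
  by rewrite ge_max ge_min lexx /= andbT; lra.
apply: (ae_mono hM') => w; rewrite ler_norml => /andP[h1 h2].
by rewrite min_r // max_r.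
Qed.

Lemma inf_le (rho : (T -> R) -> R) {X Xt : T -> R} : measurable_fun setT X -> bdd_meas Xt ->
  {ae P, forall w, Xt w = X w} -> (rhoP rho P X <= (rho Xt)%:E)%E.
Proof.
move=> mX bX hX; apply: ereal_inf_lbound; exists Xt => //; split => //.
by apply/(P1_ae bX.1 mX).
Qed.

Lemma inS (rho : (T -> R) -> R) {X : T -> R} {y} : measurable_fun setT X ->
  [set (rho Xt)%:E | Xt in [set Xt | bdd_meas Xt /\ P [set w | Xt w = X w] = 1%E]] y ->
  exists Xt, [/\ bdd_meas Xt, {ae P, forall w, Xt w = X w} & y = (rho Xt)%:E].
Proof.
move=> mX [Xt [bX PX] <-]; exists Xt; split => //.
by apply/(P1_ae bX.1 mX).
Qed.

End Helpers.

Lemma NyP (R : realType) (u : \bar R) : (forall r : R, (u <= r%:E)%E) -> u = -oo%E.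
Proof.
case: u => [s| |] // h.
  by move: h => /(_ (s - 1)); rewrite lee_fin => H; exfalso; lra.
by have := h 0.
Qed.

Lemma shift_aux (R : realType) (x y : \bar R) (a : R) :
  (x <= y - a%:E)%E -> (x + a%:E <= y)%E.
Proof.
move=> h; have := leeD2r a%:E h; rewrite subeK //.
Qed.

Lemma shift_aux2 (R : realType) (x y : \bar R) (a : R) :
  (x + a%:E <= y)%E -> (x <= y - a%:E)%E.
Proof.
move=> h; have := leeD2r (- a%:E) h; rewrite addeK //.
Qed.

Lemma shift_le (d : measure_display) (T : measurableType d) (R : realType)
  (rho : (T -> R) -> R) (P : probability T R) (hr : monetary rho) (X : T -> R) (a : R) :
  (rhoP rho P (fun w => (X w + a)%R) <= rhoP rho P X - a%:E)%E.
Proof.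
case: hr => [_ [_ hc]].
apply: shift_aux2; apply/ereal_infP => y [Xt [bX PX] <-].
apply: shift_aux.
have bXa : bdd_meas (fun w => Xt w + a).
  have -> : (fun w => Xt w + a) = (fun w => 1 * Xt w + 1 * (fun _ => a) w).
    by apply/funext => w; rewrite !mul1r.
  by apply: bdd_lin => //; exact: bdd_cst.
rewrite -EFinB -hc //.
apply: ereal_inf_lbound; exists (fun w => Xt w + a) => //; split => //.
have -> : [set w | Xt w + a = X w + a] = [set w | Xt w = X w] => //.
by apply/seteqP; split => w /=; [move/addIr | move->].
Qed.

Theorem lemma3p3 (d : measure_display) (T : measurableType d) (R : realType)
  (rho : (T -> R) -> R) (P : probability T R) :
  monetary rho ->
  (forall X : T -> R, Linf P X -> {ae P, forall w, 0 <= X w} ->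
     (rhoP rho P X <= 0)%E) /\
  (forall X Y : T -> R, Linf P X -> Linf P Y -> {ae P, forall w, Y w <= X w} ->
     (rhoP rho P X <= rhoP rho P Y)%E) /\
  (forall (X : T -> R) (a : R), Linf P X ->
     rhoP rho P (fun w => X w + a) = (rhoP rho P X - a%:E)%E) /\
  (convex_rm rho ->
   forall (X Y : T -> R) (l : R), Linf P X -> Linf P Y -> 0 < l < 1 ->
     (rhoP rho P (fun w => (l * X w + (1 - l) * Y w)%R)
        <= l%:E * rhoP rho P X + (1 - l)%:E * rhoP rho P Y)%E).
Proof.
move=> hr; have hr' := hr; case: hr' => [h1 [h2 h3]].
split.
  move=> X LX X0; have [Xt [bX eX]] := exS LX.
  have bM := bdd_max bX (bdd_cst 0).
  apply: le_trans (inf_le rho LX.1 bM _) _.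
    by apply: (ae2 eX X0) => w -> hw; rewrite max_l.
  by rewrite lee_fin; apply: h1 => // w; rewrite le_max lexx orbT.
split.
  move=> X Y LX LY YX; have [Xt [bX eX]] := exS LX.
  apply/ereal_infP => y /(inS rho LY.1) [Yt [bY eY ->]].
  have bM := bdd_max bX bY.
  apply: le_trans (inf_le rho LX.1 bM _) _.
    apply: (ae2 (ae2 eX eY (fun w a b => conj a b)) YX) => w [-> ->] hw.
    by rewrite max_l.
  by rewrite lee_fin; apply: h2 => // w; rewrite le_max lexx orbT.
split.
  move=> X a LX; apply/eqP; rewrite eq_le shift_le //=.
  apply: shift_aux.
  have := @shift_le _ _ _ rho P hr (fun w => X w + a) (- a).
  have -> : (fun w => X w + a + - a) = X by apply/funext => w; rewrite addrK.
  by rewrite EFinN oppeK.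
move=> hcv X Y l LX LY /andP[l0 l1].
set u := rhoP rho P _; set e1 := rhoP rho P X; set e2 := rhoP rho P Y.
have K : forall r1 r2, (e1 < r1%:E)%E -> (e2 < r2%:E)%E ->
    (u <= (l * r1 + (1 - l) * r2)%:E)%E.
  move=> r1 r2 /ereal_inf_lt [y /(inS rho LX.1) [Xt [bX eX ->]]] hX.
  move=> /ereal_inf_lt [y' /(inS rho LY.1) [Yt [bY eY ->]]] hY.
  rewrite lte_fin in hX hY.
  have mZ : measurable_fun setT (fun w => l * X w + (1 - l) * Y w).
    have : measurable_fun setT ((cst l \* X) \+ (cst (1 - l) \* Y)).
      apply: measurable_realfun.measurable_funD;
      apply: measurable_realfun.measurable_funM => //;
      by [exact: measurable_cst | exact: LX.1 | exact: LY.1].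
    by [].
  apply: le_trans (inf_le rho mZ (bdd_lin l (1 - l) bX bY) _) _.
    by apply: (ae2 eX eY) => w -> ->.
  rewrite lee_fin; apply: le_trans (hcv _ _ _ bX bY _) _; first by rewrite l0 l1.
  have l1' : 0 < 1 - l by rewrite subr_gt0.
  by apply: lerD; apply: ler_wpM2l; rewrite ?ltW.
have [Xt0 [bX0 eX0]] := exS LX; have [Yt0 [bY0 eY0]] := exS LY.
have f1 : (e1 < +oo)%E.
  by apply: le_lt_trans (inf_le rho LX.1 bX0 eX0) _; exact: ltry.
have f2 : (e2 < +oo)%E.
  by apply: le_lt_trans (inf_le rho LY.1 bY0 eY0) _; exact: ltry.
have l1' : 0 < 1 - l by rewrite subr_gt0.
have ln : l != 0 by rewrite gt_eqF.
have ln' : 1 - l != 0 by rewrite gt_eqF.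
have H1 : forall r2, (e2 < r2%:E)%E -> (forall r1, (e1 < r1%:E)%E) ->
    (u <= l%:E * e1 + (1 - l)%:E * e2)%E.
  move=> r2 hr2 hr1; suff -> : u = -oo%E by rewrite leNye.
  apply: NyP => r.
  have := K ((r - (1 - l) * r2) / l) r2 (hr1 _) hr2.
  by have -> : l * ((r - (1 - l) * r2) / l) + (1 - l) * r2 = r by field.
have H2 : forall r1, (e1 < r1%:E)%E -> (forall r2, (e2 < r2%:E)%E) ->
    (u <= l%:E * e1 + (1 - l)%:E * e2)%E.
  move=> r1 hr1 hr2; suff -> : u = -oo%E by rewrite leNye.
  apply: NyP => r.
  have := K r1 ((r - l * r1) / (1 - l)) hr1 (hr2 _).
  by have -> : l * r1 + (1 - l) * ((r - l * r1) / (1 - l)) = r by field.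
clearbody u e1 e2.
move: K f1 f2 H1 H2; case: e1 => [x1| |]; case: e2 => [x2| |] => K f1 f2 H1 H2;
  rewrite ?ltxx // in f1 f2.
- apply/lee_addgt0Pr => e e0.
  have := K (x1 + e) (x2 + e).
  rewrite -!EFinM -!EFinD.
  have -> : l * (x1 + e) + (1 - l) * (x2 + e) = l * x1 + (1 - l) * x2 + e by ring.
  by apply; rewrite lte_fin ltrDl.
- by apply: (H2 (x1 + 1)); rewrite ?lte_fin ?ltrDl // => r; exact: ltNyr.
- by apply: (H1 (x2 + 1)); rewrite ?lte_fin ?ltrDl // => r; exact: ltNyr.
- by apply: (H1 0) => [|r]; exact: ltNyr.
Qed.
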